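(* There is a constant $C_0$ such that the following holds. Let $n\ge1$, let $b_1,\dots,b_n\ge2$ be integers and $\varepsilon_1,\dots,\varepsilon_n\in\{+1,-1\}$ with $b_{j+1}\ge b_j^2$ for $1\le j\le n-1$, and let $x=[\langle b_j:\varepsilon_j\rangle_{j=1}^n]$. Define $x_0=1$ and $x_i=G^{\circ(i-1)}(x)$ for $1\le i\le n$. Then \[\frac{|x_n|}{|x_1|}\le C_0\prod_{i=0}^{n-1}|x_i|.\]
   Context: For $x\in\mathbb{R}$, $[x]$ denotes the closest integer to $x$ with the convention $x\in([x]-1/2,[x]+1/2]$ for $x>0$, $x\in[[x]-1/2,[x]+1/2)$ for $x<0$, and $[0]=0$. $G(z)=-1/z-[\operatorname{Re}(-1/z)]$ for $z\ne0$. For integers $b_j\ge2$ and $\varepsilon_j\in\{\pm1\}$, $[\langle b_j:\varepsilon_j\rangle_{j=1}^n]=\cfrac{\varepsilon_1}{b_1+\cfrac{\varepsilon_2}{\ddots+\cfrac{\varepsilon_n}{b_n}}}$. *)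

(* Defs.v *)
From HB Require Import structures.
From mathcomp Require Import all_boot all_order all_algebra.
From mathcomp Require Import reals.
Set Implicit Arguments. Unset Strict Implicit. Unset Printing Implicit Defensive.
Import Order.TTheory GRing.Theory Num.Theory.
Local Open Scope ring_scope.

(* Closest integer [x], ties rounded towards zero:
   x in ([x]-1/2, [x]+1/2] for x>0, x in [[x]-1/2, [x]+1/2) for x<0, [0]=0. *)
Definition nearest_int {R : realType} (x : R) : int :=
  if 0 < x then Num.ceil (x - 2^-1)
  else if x < 0 then Num.floor (x + 2^-1)
  else 0.

(* G(z) = -1/z - [Re(-1/z)], restricted to real arguments (Re is the identity). *)
Definition Gmap {R : realType} (z : R) : R :=
  - z^-1 - (nearest_int (- z^-1))%:~R.

(* cfrac b e i m = [< b_j : e_j >_{j=i}^{i+m-1}]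
   = e_i / (b_i + e_{i+1} / (b_{i+1} + ... + e_{i+m-1}/b_{i+m-1})) ; empty = 0 *)
Fixpoint cfrac {R : realType} (b e : nat -> int) (i m : nat) : R :=
  match m with
  | 0%N => 0
  | m'.+1 => (e i)%:~R / ((b i)%:~R + cfrac b e i.+1 m')
  end.

Definition xseq {R : realType} (x : R) (i : nat) : R :=
  match i with
  | 0%N => 1
  | i'.+1 => iter i' Gmap x
  end.

(* Main.v *)
Require Import Defs.
From HB Require Import structures.
From mathcomp Require Import all_boot all_order all_algebra.
From mathcomp Require Import reals.
From mathcomp Require Import lra zify ring.
Import Order.TTheory GRing.Theory Num.Theory.
Local Open Scope ring_scope.

Lemma nearest_shift (R : realType) (k : int) (t : R) :
  `|t| < 2^-1 -> nearest_int (k%:~R + t) = k.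
Proof.
move=> ht.
have [ht1 ht2] : -(2^-1) < t /\ t < 2^-1 by move: ht; rewrite ltr_norml => /andP[].
have h2 : (2^-1 : R) = 1/2 by rewrite div1r.
rewrite h2 in ht1 ht2.
have: (k <= -1) || (k == 0) || (1 <= k) by lia.
move=> /orP[/orP[hk|/eqP hk]|hk].
- have hk' : k%:~R <= -1 :> R by rewrite -(ler_int R) in hk.
  rewrite /nearest_int.
  have -> : (0 < k%:~R + t) = false by apply/negbTE; rewrite -leNgt; lra.
  have -> : (k%:~R + t < 0) = true by apply/idP; lra.
  apply: floor_def; rewrite rmorphD /=; apply/andP; split; lra.
- subst k; rewrite /nearest_int /= add0r.
  case: ltgtP => h1.
  + apply: ceil_def; rewrite h2; apply/andP; split; lra.
  + apply: floor_def; rewrite h2; apply/andP; split; lra.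
  + by [].
- have hk' : 1 <= k%:~R :> R by rewrite -(ler_int R) in hk.
  rewrite /nearest_int.
  have -> : (0 < k%:~R + t) = true by apply/idP; lra.
  apply: ceil_def; rewrite rmorphB /= h2; apply/andP; split; lra.
Qed.

Lemma G_step (R : realType) (s e b : int) (y : R) :
  (s = 1 \/ s = -1) -> (e = 1 \/ e = -1) -> `|y| < 2^-1 -> b%:~R + y != 0 ->
  Gmap (s%:~R * (e%:~R / (b%:~R + y))) = (- (s*e))%:~R * y.
Proof.
move=> hs he hy hb.
have key : - (s%:~R * (e%:~R / (b%:~R + y)))^-1
   = (-(s*e)*b)%:~R + (-(s*e))%:~R * y :> R.
  case: hs => ->; case: he => ->; rewrite /= ?rmorphM ?rmorphN ?rmorph1 /=;
   field; exact: hb.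
have hn : `|(-(s*e))%:~R * y| < 2^-1.
  rewrite normrM; have -> : `|(-(s*e))%:~R : R| = 1.
    by case: hs => ->; case: he => ->; rewrite /= ?rmorphN ?rmorph1 ?normrN normr1.
  by rewrite mul1r.
by rewrite /Gmap key nearest_shift // addrC addKr.
Qed.

Lemma cfrac_bounds (R : realType) (b e : nat -> int) (m i : nat) :
  (1 <= m)%N ->
  (forall j, (i <= j < i + m)%N -> 2 <= b j) ->
  (forall j, (i <= j < i + m)%N -> e j = 1 \/ e j = -1) ->
  ((b i)%:~R - 1) * `|cfrac b e i m : R| <= 1 /\
  1 <= ((b i)%:~R + 1) * `|cfrac b e i m : R|.
Proof.
elim: m i => [//|m IH] i _ hb he /=.
set y : R := cfrac b e i.+1 m.
have hbi : 2 <= (b i)%:~R :> R.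
  have := hb i; rewrite leqnn addnS ltnS leq_addr => /(_ isT).
  by rewrite -(ler_int R).
have hy : `|y| <= 1.
  case: m IH hb he @y => [|m] IH hb he; first by rewrite /= normr0.
  have [h1 h2] : ((b i.+1)%:~R - 1) * `|cfrac b e i.+1 m.+1 : R| <= 1 /\
     1 <= ((b i.+1)%:~R + 1) * `|cfrac b e i.+1 m.+1 : R|.
    apply: IH => // j /andP[hj1 hj2]; [apply: hb | apply: he];
    apply/andP; split; lia.
  have hb1 : 2 <= (b i.+1)%:~R :> R.
    have := hb i.+1; rewrite -(ler_int R); apply; apply/andP; split; lia.
  have := normr_ge0 (cfrac b e i.+1 m.+1 : R). move=> h0 /=; nra.
have [hy1 hy2] : -1 <= y /\ y <= 1 by move: hy; rewrite ler_norml => /andP[].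
have hpos : 0 < (b i)%:~R + y by lra.
have hei : `|(e i)%:~R : R| = 1.
  have := he i; rewrite leqnn addnS ltnS leq_addr => /(_ isT).
  by case => ->; rewrite ?rmorphN ?rmorph1 ?normrN normr1.
rewrite normrM hei mul1r normfV (gtr0_norm hpos).
have hc : ((b i)%:~R + y) * ((b i)%:~R + y)^-1 = 1 :> R by rewrite mulfV // gt_eqF.
have hc0 : 0 < ((b i)%:~R + y)^-1 :> R by rewrite invr_gt0.
move: hc hc0; set c := ((b i)%:~R + y)^-1 => hc hc0.
split; nra.
Qed.

Section Main.
Variables (R : realType) (n : nat) (b e : nat -> int).
Hypothesis hn : (1 <= n)%N.
Hypothesis hb : forall j, (1 <= j <= n)%N -> 2 <= b j.
Hypothesis he : forall j, (1 <= j <= n)%N -> e j = 1 \/ e j = -1.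
Hypothesis hg : forall j, (1 <= j <= n.-1)%N -> b j ^+ 2 <= b j.+1.

Let B j : R := (b j)%:~R.

Lemma hbR j : (1 <= j <= n)%N -> 2 <= B j.
Proof. by move=> hj; have := hb _ hj; rewrite -(ler_int R). Qed.

Lemma hgR j : (1 <= j)%N -> (j < n)%N -> B j ^+ 2 <= B j.+1.
Proof.
move=> h1 h2; rewrite /B -rmorphXn /= ler_int; apply: hg; apply/andP; split; lia.
Qed.

Lemma cb i : (1 <= i <= n)%N ->
  (B i - 1) * `|cfrac b e i (n - i).+1 : R| <= 1 /\
  1 <= (B i + 1) * `|cfrac b e i (n - i).+1 : R|.
Proof.
move=> /andP[h1 h2]; apply: cfrac_bounds => // j /andP[hj1 hj2];
  [apply: hb | apply: he]; apply/andP; split; lia.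
Qed.

Lemma xchar i : (i < n)%N -> exists s : int, (s = 1 \/ s = -1) /\
  iter i Gmap (cfrac b e 1 n : R) = s%:~R * cfrac b e i.+1 (n - i).
Proof.
elim: i => [_|i IH hi].
  by exists 1; split; [left | rewrite subn0 mul1r].
have [s [hs hx]] := IH (ltnW hi).
have e1 : (n - i = (n - i.+1).+1)%N by lia.
rewrite e1 in hx.
rewrite iterS hx /=.
have [h1 _] := cb i.+2 ltac:(apply/andP; split; lia).
rewrite (_ : (n - i.+2).+1 = (n - i.+1)%N) in h1; last by lia.
have hB2 := hbR i.+2 ltac:(apply/andP; split; lia).
have hB1 := hbR i.+1 ltac:(apply/andP; split; lia).
have hG := hgR i.+1 isT hi.
have hy0 := normr_ge0 (cfrac b e i.+2 (n - i.+1) : R).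
have hy : `|cfrac b e i.+2 (n - i.+1) : R| <= 3^-1.
  rewrite -[X in _ <= X]div1r ler_pdivlMr; last by [].
  nra.
exists (- (s * e i.+1)); split.
  have := he i.+1 ltac:(apply/andP; split; lia).
  by case: hs => ->; case => ->; [right|left|left|right].
apply: G_step => //.
- by apply: he; apply/andP; split; lia.
- apply: (le_lt_trans hy); rewrite ltf_pV2 ?posrE //; lra.
- move: hy; rewrite ler_norml => /andP[y1 y2].
  rewrite gt_eqF //; move: hB1; rewrite /B => hB1'; lra.
Qed.

Lemma aB i : (1 <= i <= n)%N ->
  (B i - 1) * `|xseq (cfrac b e 1 n : R) i| <= 1 /\
  1 <= (B i + 1) * `|xseq (cfrac b e 1 n : R) i|.
Proof.
case: i => [//|i] hi /=.
have [s [hs ->]] := xchar i ltac:(lia).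
rewrite normrM (_ : `|s%:~R : R| = 1); last first.
  by case: hs => ->; rewrite ?rmorphN ?rmorph1 ?normrN normr1.
rewrite mul1r (_ : (n - i = (n - i.+1).+1)%N); last by lia.
exact: cb.
Qed.

Lemma prodbound k : (1 <= k <= n)%N ->
  B 1 + 1 <= 3 * (B k - 1) * \prod_(1 <= i < k) `|xseq (cfrac b e 1 n : R) i|.
Proof.
elim: k => [//|k IH] hk.
have hB1 := hbR 1 ltac:(apply/andP; split; lia).
case: k IH hk => [|k] IH hk.
  rewrite big_geq //. lra.
have {}IH := IH ltac:(apply/andP; split; lia).
rewrite big_nat_recr /=; last by [].
set P := \prod_(1 <= i < k.+1) _ in IH *.
set a := `|xseq _ k.+1|.
have hP : 0 <= P by apply: prodr_ge0 => i _; exact: normr_ge0.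
have ha : 0 <= a by exact: normr_ge0.
have [_ ha1] := aB k.+1 ltac:(apply/andP; split; lia).
have hBk := hbR k.+1 ltac:(apply/andP; split; lia).
have hG := hgR k.+1 isT ltac:(lia).
set Q := 3 * (B k.+1 - 1) * P in IH.
have hQ : 0 <= Q by rewrite /Q; apply: mulr_ge0 => //; lra.
have h1 : Q <= Q * ((B k.+1 + 1) * a) by rewrite -{1}(mulr1 Q) ler_wpM2l.
have h2 : Q * ((B k.+1 + 1) * a) <= 3 * (B k.+2 - 1) * (P * a).
  rewrite /Q.
  have -> : 3 * (B k.+1 - 1) * P * ((B k.+1 + 1) * a)
     = 3 * (B k.+1 ^+ 2 - 1) * (P * a) by ring.
  apply: ler_wpM2r; first exact: mulr_ge0.
  lra.
lra.
Qed.

Lemma final : `|xseq (cfrac b e 1 n : R) n| / `|xseq (cfrac b e 1 n : R) 1|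
   <= 3 * \prod_(0 <= i < n) `|xseq (cfrac b e 1 n : R) i|.
Proof.
rewrite big_ltn // (_ : `|xseq _ 0| = 1); last by rewrite /= normr1.
rewrite mul1r.
have hP := prodbound n ltac:(apply/andP; split; lia).
have [hn1 _] := aB n ltac:(apply/andP; split; lia).
have [_ h11] := aB 1 ltac:(apply/andP; split; lia).
have hB1 := hbR 1 ltac:(apply/andP; split; lia).
have hBn := hbR n ltac:(apply/andP; split; lia).
set P := \prod_(1 <= i < n) _ in hP *.
set an := `|xseq _ n| in hn1 *.
set a1 := `|xseq _ 1| in h11 *.
have ha1 : 0 < a1 by have := normr_ge0 (xseq (cfrac b e 1 n : R) 1); rewrite -/a1; nra.
rewrite ler_pdivrMr //.
have hP0 : 0 <= P by apply: prodr_ge0 => i _; exact: normr_ge0.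
have hx : (B n - 1) * an <= (B n - 1) * (3 * P * a1).
  have : (B 1 + 1) * a1 <= 3 * (B n - 1) * P * a1 by rewrite ler_wpM2r // ltW.
  nra.
rewrite ler_pM2l in hx; last by lra.
by [].
Qed.

End Main.

Theorem lemma6p5 (R : realType) :
  exists C0 : R,
  forall (n : nat) (b eps : nat -> int),
    (1 <= n)%N ->
    (forall j, (1 <= j <= n)%N -> 2 <= b j) ->
    (forall j, (1 <= j <= n)%N -> eps j = 1 \/ eps j = -1) ->
    (forall j, (1 <= j <= n.-1)%N -> b j ^+ 2 <= b j.+1) ->
    let x : R := cfrac b eps 1 n in
    `|xseq x n| / `|xseq x 1| <= C0 * \prod_(0 <= i < n) `|xseq x i|.
Proof.
exists 3 => n b eps hn hb he hg /=.
exact: final.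
Qed.
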